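(* Let $n,t$ be integers with $1\le t\le n-3$, and let $P_{n,t}^{++}$ be the graph obtained from the path $v_1v_2\dots v_{n-1}$ by adding a new vertex $u$ and the two edges $uv_t$ and $uv_{t+2}$. Then $\mu_2(P_{n,t}^{++})<4$.
   Context: For a graph $G$ of order $n$, $\mu_1(G)\ge\mu_2(G)\ge\dots\ge\mu_n(G)$ denote the eigenvalues of the Laplacian matrix $L(G)=D(G)-A(G)$. *)

(* Defs.v *)
From HB Require Import structures.
From mathcomp Require Import all_boot all_order all_algebra.
From mathcomp Require Import reals.
Set Implicit Arguments. Unset Strict Implicit. Unset Printing Implicit Defensive.
Import Order.TTheory GRing.Theory Num.Theory.
Local Open Scope ring_scope.

Definition gdeg (n : nat) (adj : rel 'I_n) (i : 'I_n) : nat :=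
  #|[set j | adj i j]|.

Definition laplacian (R : realType) (n : nat) (adj : rel 'I_n) : 'M[R]_n :=
  \matrix_(i, j) ((if i == j then (gdeg adj i)%:R else 0) - (adj i j)%:R).

Definition is_spectrum (R : realType) (n : nat) (A : 'M[R]_n) (s : seq R) : Prop :=
  char_poly A = \prod_(x <- s) ('X - x%:P).

(* k-th largest element (1-indexed) of a list of reals: mu_1 >= mu_2 >= ... *)
Definition kth_largest (R : realType) (k : nat) (s : seq R) : R :=
  nth 0 (sort (fun x y : R => y <= x) s) k.-1.

(* The graph P_{n,t}^{++} on 'I_n: vertex v_i (1 <= i <= n-1) is i-1,
   the extra vertex u is n-1.  Path edges v_i v_{i+1}, i.e. a -- a+1 for
   a+1 < n-1, plus edges u v_t (= t-1) and u v_{t+2} (= t+1). *)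
Definition Ppp_adj (n t : nat) : rel 'I_n := fun i j =>
  let a := nat_of_ord i in let b := nat_of_ord j in
  [|| (a.+1 == b) && (b < n.-1),
      (b.+1 == a) && (a < n.-1),
      (a == n.-1) && ((b == t.-1) || (b == t.+1))
    | (b == n.-1) && ((a == t.-1) || (a == t.+1))]%N.

Arguments Ppp_adj n t : clear implicits.
Arguments laplacian R {n} adj.

(* Main.v *)
Require Import Defs.
From HB Require Import structures.
From mathcomp Require Import all_boot all_order all_algebra.
From mathcomp Require Import reals.
From mathcomp Require Import complex spectral sesquilinear.
Import Order.TTheory GRing.Theory Num.Theory.
Local Open Scope ring_scope.
Local Open Scope sesquilinear_scope.
From mathcomp Require Import ring zify.
Lemma char_poly_conj (F : fieldType) n (P D : 'M[F]_n) : P \in unitmx ->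
  char_poly (invmx P *m D *m P) = char_poly D.
Proof.
move=> Pu.
pose Pp := map_mx (@polyC F) P; pose Pi := map_mx (@polyC F) (invmx P).
have PiPp : Pi *m Pp = 1%:M by rewrite -map_mxM mulVmx // map_mx1.
rewrite /char_poly.
have -> : char_poly_mx (invmx P *m D *m P) = Pi *m char_poly_mx D *m Pp.
  rewrite /char_poly_mx mulmxBr mulmxBl !map_mxM.
  by rewrite mul_mx_scalar -scalemxAl PiPp -mul_mx_scalar mul1mx.
rewrite !det_mulmx mulrC mulrA -det_mulmx.
by rewrite -map_mxM mulmxV // map_mx1 det1 mul1r.
Qed.

Section Spec0.
Variable R : realType.
Local Notation C := (R[i]).
Local Notation rc := (real_complex R).
Lemma spec_data n (M : 'M[R]_n) : M^T = M ->
  exists (P : 'M[C]_n) (d : 'I_n -> R),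
    [/\ P *m P ^t* = 1%:M, map_mx rc M = P ^t* *m diag_mx (\row_i rc (d i)) *m P
      & char_poly M = \prod_(i < n) ('X - (d i)%:P)].
Proof.
move=> Msym.
set A := map_mx rc M.
have Aherm : A \is hermsymmx.
  apply: realsym_hermsym.
    apply/is_hermitianmxP; rewrite expr0 scale1r map_mx_id //.
    by rewrite /A map_trmx Msym.
  apply/mxOverP => i j; rewrite mxE; apply/complex_realP; by eexists.
have /orthomx_spectralP Aeq := hermitian_normalmx Aherm.
have Pun := spectral_unitarymx A.
have dreal := hermitian_spectral_diag_real Aherm.
set P := spectralmx A in Aeq Pun; set d := spectral_diag A in Aeq dreal.
exists P, (fun i => complex.Re (d 0 i)).
have dE : \row_i rc (complex.Re (d 0 i)) = d.
  apply/rowP => i; rewrite mxE.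
  have /complex_realP [k ->] := mxOverP dreal 0 i. by [].
rewrite dE; split.
- exact/unitarymxP.
- by rewrite -invmx_unitary.
- apply: (@map_poly_inj _ _ rc).
  rewrite map_char_poly -/A {1}Aeq char_poly_conj ?unitarymx_unit //.
  rewrite char_poly_trig ?diag_mx_is_trig // rmorph_prod.
  apply: eq_bigr => i _; rewrite mxE eqxx mulr1n.
  rewrite rmorphB /= map_polyX map_polyC /=.
  by rewrite -dE mxE.
Qed.
End Spec0.
Section Spec1.
Variable R : realType.
Local Notation C := (R[i]).
Local Notation rc := (real_complex R).

Lemma two_big n (P A : 'M[C]_n) (d : 'I_n -> R) (u w : 'I_n) :
  P *m P ^t* = 1%:M -> A = P ^t* *m diag_mx (\row_i rc (d i)) *m P ->
  (forall x : 'rV[C]_n, x != 0 -> x 0 u + x 0 w = 0 ->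
      (x *m A *m x^t*) 0 0 < 4 * (x *m x^t*) 0 0) ->
  forall i j, i != j -> 4 <= d i -> 4 <= d j -> False.
Proof.
move=> PP Aeq K i j ij di dj.
have Pu : P \is unitarymx by apply/unitarymxP.
have PtP : P ^t* *m P = 1%:M by rewrite -invmx_unitary // mulVmx // unitarymx_unit.
pose g k := P k u + P k w.
pose a := if g i == 0 then 1 else g j.
pose b := if g i == 0 then 0 else - g i.
pose y : 'rV[C]_n := a *: delta_mx 0 i + b *: delta_mx 0 j.
have yE k : y 0 k = a * (k == i)%:R + b * (k == j)%:R.
  by rewrite !mxE !eqxx.
have y0 : y != 0.
  apply/negP => /eqP /rowP y0.
  case: (eqVneq (g i) 0) => gi.
    by move: (y0 i); rewrite yE mxE eqxx (negbTE ij) /a gi eqxx mulr1 mulr0 addr0 => /eqP; rewrite oner_eq0.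
  move: (y0 j); rewrite yE mxE eqxx eq_sym (negbTE ij) /b (negbTE gi) mulr1 mulr0 add0r => /eqP.
  by rewrite oppr_eq0 (negbTE gi).
pose x := y *m P.
have x0 : x != 0.
  apply: contraNneq y0 => x0.
  by rewrite -[y]mulmx1 -PP mulmxA -/x x0 mul0mx.
have fx : x 0 u + x 0 w = 0.
  rewrite /x /y mulmxDl -!scalemxAl -!rowE !mxE.
  have : a * g i + b * g j = 0.
    rewrite /a /b; case: eqP => gi; first by rewrite gi mulr0 mul0r addr0.
    by rewrite mulNr mulrC subrr.
  by rewrite /g !mulrDr addrACA.
have := K x x0 fx.
have xt : x ^t* = P ^t* *m y ^t* by rewrite /x trmx_mul map_mxM.
have key : 4 * (y *m y^t*) 0 0 <= (y *m diag_mx (\row_i rc (d i)) *m y^t*) 0 0.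
  rewrite mul_mx_diag !mxE mulr_sumr.
  apply: ler_sum => k _; rewrite !mxE.
  set z := (a * _ + _).
  case: (boolP ((k == i) || (k == j))) => hk.
    have dk : 4 <= d k by case/orP: hk => /eqP->.
    rewrite mulrAC [4 * _]mulrC; apply: ler_wpM2l; first exact: mul_conjC_ge0.
    by rewrite -(rmorph_nat rc) lecR.
  move: hk; rewrite negb_or => /andP[/negbTE hi /negbTE hj].
  rewrite /z hi hj.
  by rewrite /z !andbF !mulr0 addr0 !mul0r mulr0.
rewrite xt Aeq /x !mulmxA -[y *m P *m P^t*]mulmxA PP mulmx1.
rewrite -[y *m _ *m P *m P^t*]mulmxA PP mulmx1.
by move=> H; have := lt_le_trans H key; rewrite ltxx.
Qed.
End Spec1.
Section K3.
Variable R : realType.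
Local Notation C := (R[i]).
Local Notation N z := (`|z| ^+ 2).

Lemma N_ge0 (z : C) : 0 <= N z.
Proof. exact: exprn_ge0. Qed.

Lemma N_eq0 (z : C) : (N z == 0) = (z == 0).
Proof. by rewrite sqrf_eq0 normr_eq0. Qed.

Lemma paral (a b : C) : N (a - b) + N (a + b) = 2 * N a + 2 * N b.
Proof.
rewrite !normCK !rmorphB !rmorphD /=. ring.
Qed.

Lemma path_id (X : nat -> C) m :
  \sum_(k < m) N (X k - X k.+1) + \sum_(k < m) N (X k + X k.+1)
    + 2 * N (X 0%N) + 2 * N (X m) = 4 * \sum_(k < m.+1) N (X k).
Proof.
elim: m => [|m IH].
  rewrite !big_ord0 big_ord1; ring.
rewrite !(big_ord_recr m.+1) /= !(big_ord_recr m) /=.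
rewrite big_ord_recr /= in IH.
have := paral (X m) (X m.+1).
move: IH; set A := \sum_(i < m) _; set B := \sum_(i < m) _; set D := \sum_(i < m) _.
move=> IH P.
rewrite mulrDr -IH (canRL (addrK _) P); ring.
Qed.

Lemma psum_nat0 (F : nat -> C) m n : (forall k, 0 <= F k) ->
  \sum_(m <= k < n) F k = 0 -> forall k, (m <= k < n)%N -> F k = 0.
Proof.
move=> F0; elim: n => [|n IH]; first by move=> _ k; rewrite ltn0 andbF.
case: (leqP m n) => mn.
  rewrite big_nat_recr //= => /eqP; rewrite paddr_eq0 ?sumr_ge0 // => /andP[/eqP S /eqP Fn] k /andP[mk].
  rewrite ltnS leq_eqVlt => /orP[/eqP -> //|kn].
  by apply: IH => //; rewrite mk.
move=> _ k /andP[mk kn]; have := leq_ltn_trans mk kn; by rewrite ltnS leqNgt mn.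
Qed.

Lemma K3 (X : nat -> C) p s : (s < p)%N -> X p.+2 = - X s.+1 ->
  (exists2 k, (k < p.+3)%N & X k != 0) ->
  \sum_(k < p.+1) N (X k - X k.+1) + N (X p.+2 - X s) + N (X p.+2 - X s.+2)
    < 4 * \sum_(k < p.+3) N (X k).
Proof.
move=> sp Xu [k0 k0lt Xk0].
have PI := path_id X p.+1.
set S1 := \sum_(0 <= k < s) N (X k + X k.+1).
set S2 := \sum_(s.+2 <= k < p.+1) N (X k + X k.+1).
have Ssum : \sum_(k < p.+1) N (X k + X k.+1) =
    S1 + N (X s + X s.+1) + N (X s.+1 + X s.+2) + S2.
  rewrite -[LHS](big_mkord xpredT (fun k => N (X k + X k.+1))) (@big_cat_nat _ _ _ s 0 p.+1) //=; last by apply: leqW; apply: ltnW.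
  rewrite (@big_cat_nat _ _ _ s.+2 s p.+1) //=; last exact: leqW.
  by rewrite big_nat_recl // big_nat1 !addrA.
have e1 : N (X p.+2 - X s) = N (X s + X s.+1).
  by rewrite Xu -opprD normrN addrC.
have e2 : N (X p.+2 - X s.+2) = N (X s.+1 + X s.+2).
  by rewrite Xu -opprD normrN.
rewrite e1 e2 (big_ord_recr p.+2) /= Xu normrN.
rewrite Ssum in PI.
move: PI; set D := \sum_(k < p.+1) N (X k - X k.+1); set Nm := \sum_(k < p.+2) N (X k).
move=> PI.
rewrite -subr_gt0.
have -> : 4 * (Nm + N (X s.+1)) - (D + N (X s + X s.+1) + N (X s.+1 + X s.+2))
   = S1 + S2 + 2 * N (X 0%N) + 2 * N (X p.+1) + 4 * N (X s.+1).
  rewrite mulrDr -PI; ring.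
have S1ge : 0 <= S1 by apply: sumr_ge0 => *; exact: N_ge0.
have S2ge : 0 <= S2 by apply: sumr_ge0 => *; exact: N_ge0.
rewrite lt_def !addr_ge0 ?mulr_ge0 ?N_ge0 // andbT.
apply/negP; rewrite !paddr_eq0 ?addr_ge0 ?mulr_ge0 ?N_ge0 //.
move=> H; move: H; rewrite !mulf_eq0.
rewrite !normr_eq0 !pnatr_eq0 !orbb -!andbA /= => /and5P[/eqP S10 /eqP S20 /eqP X0 /eqP Xp1 /eqP Xs1].
have h1 : forall k, (0 <= k < s)%N -> N (X k + X k.+1) = 0.
  by apply: psum_nat0 => // k; exact: N_ge0.
have h2 : forall k, (s.+2 <= k < p.+1)%N -> N (X k + X k.+1) = 0.
  by apply: psum_nat0 => // k; exact: N_ge0.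
have up k : (k <= s)%N -> X k = 0.
  elim: k => [//|k IH] ks.
  have := h1 k ks; rewrite IH ?add0r; last exact: ltnW.
  by move/eqP; rewrite sqrf_eq0 normr_eq0 => /eqP.
have down j : forall k, (k + j = p.+1)%N -> (s.+2 <= k)%N -> X k = 0.
  elim: j => [|j IH] k.
    by rewrite addn0 => ->.
  move=> kj sk.
  have Xk1 : X k.+1 = 0 by apply: IH; [rewrite addSnnS | apply: leqW].
  have := h2 k; rewrite Xk1 addr0 => H.
  suff /eqP : N (X k) = 0 by rewrite sqrf_eq0 normr_eq0 => /eqP.
  apply: H; by rewrite sk /= -kj addnS ltnS leq_addr.
move/eqP: Xk0; apply.
case: (leqP k0 s) => [/up //|sk0].
case: (eqVneq k0 s.+1) => [-> //|nk0].
case: (eqVneq k0 p.+2) => [->|nk2]; first by rewrite Xu Xs1 oppr0.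
apply: (down (p.+1 - k0)%N); first by move: k0lt nk2; lia.
by move: sk0 nk0; lia.
Qed.
End K3.
Section K1.
Variable R : realType.
Local Notation C := (R[i]).
Local Notation rc := (real_complex R).

Lemma lap_form n (adj : rel 'I_n) (x : 'rV[C]_n) : (forall a b, adj a b = adj b a) ->
  2 * (x *m map_mx rc (laplacian R adj) *m x^t*) 0 0 =
  \sum_a \sum_b (adj a b)%:R * `|x 0 a - x 0 b| ^+ 2.
Proof.
move=> sym.
set M := map_mx rc _.
have Mab a b : M a b = (a == b)%:R * (gdeg adj a)%:R - (adj a b)%:R.
  rewrite !mxE rmorphB /=; case: (a == b); rewrite /= ?rmorph_nat ?rmorph0 ?mul1r ?mul0r ?rmorph_nat //.
have deg a : (gdeg adj a)%:R = \sum_b (adj a b)%:R :> C.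
  rewrite /gdeg cardsE -sum1_card natr_sum big_mkcond /=.
  by apply: eq_bigr => b _; rewrite -topredE /=; case: (adj a b).
have form : (x *m M *m x^t*) 0 0 =
    \sum_a (gdeg adj a)%:R * (x 0 a * (x 0 a)^*) - \sum_a \sum_b (adj a b)%:R * (x 0 a * (x 0 b)^*).
  rewrite mxE.
  under eq_bigr => j _ do rewrite !mxE mulr_suml.
  rewrite exchange_big /= -sumrB; apply: eq_bigr => a _.
  under eq_bigr => b _ do rewrite Mab.
  rewrite (eq_bigr (fun b => (a == b)%:R * ((gdeg adj a)%:R * (x 0 a * (x 0 b)^*)) - (adj a b)%:R * (x 0 a * (x 0 b)^*))); last by move=> b _; ring.
  rewrite sumrB; congr (_ - _).
  rewrite (bigD1 a) //= eqxx mul1r big1 ?addr0 // => b /negbTE.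
  by rewrite eq_sym => ->; rewrite mul0r.
rewrite form.
have e1 : \sum_a \sum_b (adj a b)%:R * (x 0 b * (x 0 b)^*) = \sum_a (gdeg adj a)%:R * (x 0 a * (x 0 a)^*).
  rewrite exchange_big /=; apply: eq_bigr => a _; rewrite deg mulr_suml.
  by apply: eq_bigr => b _; rewrite sym.
have e2 : \sum_a \sum_b (adj a b)%:R * (x 0 b * (x 0 a)^*) = \sum_a \sum_b (adj a b)%:R * (x 0 a * (x 0 b)^*).
  rewrite exchange_big /=; apply: eq_bigr => a _.
  by apply: eq_bigr => b _; rewrite sym.
have e3 : \sum_a (gdeg adj a)%:R * (x 0 a * (x 0 a)^*) = \sum_a \sum_b (adj a b)%:R * (x 0 a * (x 0 a)^*).
  by apply: eq_bigr => a _; rewrite deg mulr_suml.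
have -> : \sum_a \sum_b (adj a b)%:R * `|x 0 a - x 0 b| ^+ 2 =
   \sum_a \sum_b (adj a b)%:R * (x 0 a * (x 0 a)^*) + \sum_a \sum_b (adj a b)%:R * (x 0 b * (x 0 b)^*)
   - \sum_a \sum_b (adj a b)%:R * (x 0 a * (x 0 b)^*) - \sum_a \sum_b (adj a b)%:R * (x 0 b * (x 0 a)^*).
  rewrite -!big_split -!sumrB /=; apply: eq_bigr => a _.
  rewrite -!big_split -!sumrB /=; apply: eq_bigr => b _.
  rewrite normCK rmorphB /=; ring.
rewrite e1 e2 -e3; ring.
Qed.
End K1.
Section K2.
Variable R : realType.
Local Notation C := (R[i]).

Local Open Scope nat_scope.
Lemma adj_dec (a b p s : nat) : (s < p)%N ->
  ([|| (a.+1 == b) && (b < p.+2), (b.+1 == a) && (a < p.+2),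
      (a == p.+2) && ((b == s) || (b == s.+2)) | (b == p.+2) && ((a == s) || (a == s.+2))] : nat)
  = ((b < p.+2) && (b == a.+1) : nat) + ((a < p.+2) && (a == b.+1) : nat)
    + ((a == p.+2) && (b == s) : nat) + ((a == p.+2) && (b == s.+2) : nat)
    + ((b == p.+2) && (a == s) : nat) + ((b == p.+2) && (a == s.+2) : nat).
Proof.
move=> sp.
have -> : [|| (a.+1 == b) && (b < p.+2), (b.+1 == a) && (a < p.+2),
      (a == p.+2) && ((b == s) || (b == s.+2)) | (b == p.+2) && ((a == s) || (a == s.+2))]
  = [|| (b < p.+2) && (b == a.+1), (a < p.+2) && (a == b.+1), (a == p.+2) && (b == s),
        (a == p.+2) && (b == s.+2), (b == p.+2) && (a == s) | (b == p.+2) && (a == s.+2)] by lia.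
set c1 := (b < p.+2) && _; set c2 := (a < p.+2) && _; set c3 := (a == p.+2) && (b == s).
set c4 := (a == p.+2) && (b == s.+2); set c5 := (b == p.+2) && (a == s); set c6 := (b == p.+2) && (a == s.+2).
have : ~~ (c1 && c2) /\ ~~ (c1 && c3) /\ ~~ (c1 && c4) /\ ~~ (c1 && c5) /\ ~~ (c1 && c6) /\
  ~~ (c2 && c3) /\ ~~ (c2 && c4) /\ ~~ (c2 && c5) /\ ~~ (c2 && c6) /\ ~~ (c3 && c4) /\
  ~~ (c3 && c5) /\ ~~ (c3 && c6) /\ ~~ (c4 && c5) /\ ~~ (c4 && c6) /\ ~~ (c5 && c6).
  rewrite /c1 /c2 /c3 /c4 /c5 /c6; lia.
by case: c1; case: c2; case: c3; case: c4; case: c5; case: c6; intuition.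
Qed.

Local Open Scope ring_scope.
Lemma sum_ind n (F : nat -> C) (P : pred nat) c :
  \sum_(j < n) (P j && (j == c :> nat))%:R * F j = ((c < n)%N && P c)%:R * F c.
Proof.
rewrite (eq_bigr (fun j : 'I_n => if P j && (j == c :> nat) then F j else 0)); last first.
  by move=> j _; case: (_ && _); rewrite ?mul1r ?mul0r.
rewrite -big_mkcond big_ord1_cond_eq.
by case: (_ && _); rewrite ?mul1r ?mul0r.
Qed.

Lemma sum_ind1 n (F : nat -> C) c :
  \sum_(j < n) (j == c :> nat)%:R * F j = (c < n)%N%:R * F c.
Proof. have := sum_ind n F xpredT c; rewrite andbT /= => <-. by apply: eq_bigr. Qed.

Lemma K2 (p s : nat) (h : nat -> nat -> C) : (s < p)%N -> (forall a b, h a b = h b a) ->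
  \sum_(a < p.+3) \sum_(b < p.+3) (Ppp_adj p.+3 s.+1 a b)%:R * h a b =
  2 * (\sum_(k < p.+1) h k k.+1 + h p.+2 s + h p.+2 s.+2).
Proof.
move=> sp hs.
rewrite /Ppp_adj /=.
under eq_bigr => a _ do under eq_bigr => b _ do rewrite (adj_dec _ _ _ _ sp) !natrD !mulrDl.
under eq_bigr => a _ do rewrite !big_split /=.
rewrite !big_split /=.
set T1 := \sum_(a < p.+3) \sum_(b < p.+3) (((b < p.+2)%N && (b == a.+1 :> nat)) : nat)%:R * h a b.
have E1 : T1 = \sum_(k < p.+1) h k k.+1.
  rewrite /T1; under eq_bigr => a _ do rewrite (sum_ind _ (h a) (fun b => (b < p.+2)%N)).
  rewrite (big_ord_widen p.+3 (fun k => h k k.+1)); last lia.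
  rewrite [RHS]big_mkcond /=.
  apply: eq_bigr => a _.
  have -> : ((a.+1 < p.+3)%N && (a.+1 < p.+2)%N) = (a < p.+1)%N by lia.
  by case: (a < p.+1)%N; rewrite ?mul1r ?mul0r.
have E2 : \sum_(a < p.+3) \sum_(b < p.+3) (((a < p.+2)%N && (a == b.+1 :> nat)) : nat)%:R * h a b = T1.
  rewrite exchange_big /=; apply: eq_bigr => a _; apply: eq_bigr => b _; by rewrite hs.
have E3 c : (c < p.+3)%N -> \sum_(a < p.+3) \sum_(b < p.+3) ((a == p.+2 :> nat) && (b == c :> nat) : nat)%:R * h a b = h p.+2 c.
  move=> cp.
  under eq_bigr => a _ do under eq_bigr => b _ do rewrite -mulnb natrM -mulrA.
  under eq_bigr => a _ do rewrite -mulr_sumr sum_ind1 cp /= mul1r.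
  by rewrite (sum_ind1 _ (fun a => h a c)) ltnSn mul1r.
have E4 c : (c < p.+3)%N -> \sum_(a < p.+3) \sum_(b < p.+3) ((b == p.+2 :> nat) && (a == c :> nat) : nat)%:R * h a b = h p.+2 c.
  move=> cp; rewrite exchange_big /= -(E3 c cp); apply: eq_bigr => a _; apply: eq_bigr => b _; by rewrite hs.
have c1 : (s < p.+3)%N by lia.
have c2 : (s.+2 < p.+3)%N by lia.
rewrite E2 E1 (E3 s c1) (E3 s.+2 c2) (E4 s c1) (E4 s.+2 c2).
ring.
Qed.
End K2.
Lemma Ppp_sym p s (a b : 'I_p.+3) : (s < p)%N -> Ppp_adj p.+3 s.+1 a b = Ppp_adj p.+3 s.+1 b a.
Proof. move=> sp; rewrite /Ppp_adj /=; lia. Qed.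

Section Fin.
Variable R : realType.
Local Notation C := (R[i]).
Local Notation rc := (real_complex R).

Lemma Kmain (p s : nat) (x : 'rV[C]_(p.+3)) : (s < p)%N -> x != 0 ->
  x 0 ord_max + x 0 (inord s.+1) = 0 ->
  (x *m map_mx rc (laplacian R (Ppp_adj p.+3 s.+1)) *m x^t*) 0 0 < 4 * (x *m x^t*) 0 0.
Proof.
move=> sp x0 cons.
pose X k := x 0 (inord k).
have xX (a : 'I_p.+3) : x 0 a = X a by rewrite /X inord_val.
have LF := @lap_form R _ _ x (fun a b => @Ppp_sym p s a b sp).
rewrite (eq_bigr (fun a : 'I_p.+3 => \sum_(b < p.+3) (Ppp_adj p.+3 s.+1 a b)%:R * `|X a - X b| ^+ 2)) in LF; last first.
  by move=> a _; apply: eq_bigr => b _; rewrite !xX.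
rewrite (@K2 R p s (fun a b => `|X a - X b| ^+ 2) sp) in LF; last first.
  by move=> a b; rewrite -normrN opprB.
have Q : (x *m map_mx rc (laplacian R (Ppp_adj p.+3 s.+1)) *m x^t*) 0 0 =
   \sum_(k < p.+1) `|X k - X k.+1| ^+ 2 + `|X p.+2 - X s| ^+ 2 + `|X p.+2 - X s.+2| ^+ 2.
  by apply: (mulfI (x := 2)) => //; rewrite pnatr_eq0.
have Nm : (x *m x^t*) 0 0 = \sum_(k < p.+3) `|X k| ^+ 2.
  rewrite mxE; apply: eq_bigr => a _; by rewrite !mxE normCK xX.
rewrite Q Nm.
apply: K3 => //.
  rewrite -(xX ord_max) -(addrK (x 0 (inord s.+1)) (x 0 ord_max)) cons sub0r.
  by [].
have [a xa] : exists a, x 0 a != 0.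
  apply/existsP; move: x0; apply: contraR; rewrite negb_exists => /forallP H.
  by apply/eqP/rowP => a; rewrite mxE; apply/eqP; move: (H a); rewrite negbK.
by exists a; rewrite ?ltn_ord // -xX.
Qed.

Lemma kth_lemma (s : seq R) : (2 <= size s)%N ->
  (count (fun x : R => (4 <= x)%R) s <= 1)%N -> kth_largest 2 s < 4.
Proof.
move=> ss cs; rewrite /kth_largest /=.
set l := sort _ s.
have pl : perm_eq l s by rewrite perm_sort.
have sl : sorted (fun x y : R => y <= x) l by apply: sort_sorted => x y; exact: le_total.
have sz : size l = size s by apply: perm_size.
have cc : count (fun x => 4 <= x) l = count (fun x => 4 <= x) s by apply/permP.
move: sl sz cc; clear pl; case: l => [|a [|b l']] //=.
move=> /andP[ba _] _ cc.
rewrite ltNge; apply/negP => hb.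
have ha : 4 <= a := le_trans hb ba.
by move: cs; rewrite -cc ha hb.
Qed.
End Fin.

Local Open Scope ring_scope.
Theorem lemma4p3 (R : realType) (n t : nat) :
  (1 <= t)%N -> (t <= n - 3)%N ->
  (exists s : seq R, is_spectrum (laplacian R (Ppp_adj n t)) s) /\
  (forall s : seq R, is_spectrum (laplacian R (Ppp_adj n t)) s ->
     kth_largest 2 s < 4).
Proof.
move=> t1 tn.
have [p [s [np [ts sp]]]] : exists p s, n = p.+3 /\ t = s.+1 /\ (s < p)%N.
  by exists (n - 3)%N, t.-1; lia.
subst n t.
set L := laplacian R (Ppp_adj p.+3 s.+1).
have Lsym : L^T = L.
  apply/matrixP => i j; rewrite !mxE (@Ppp_sym p s i j sp) eq_sym.
  by case: eqP => [->|].
have [P [d [PP Aeq cp]]] := @spec_data R _ L Lsym.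
have cp' : char_poly L = \prod_(x <- [seq d i | i <- enum 'I_p.+3]) ('X - x%:P).
  by rewrite cp big_map big_enum.
split; first by exists [seq d i | i <- enum 'I_p.+3].
move=> s0 hs.
have pe : perm_eq s0 [seq d i | i <- enum 'I_p.+3].
  by apply: prod_XsubC_eq; rewrite -hs cp'.
have atmost := @two_big R _ _ _ d _ _ PP Aeq (@Kmain R p s ^~ sp).
apply: kth_lemma.
  by rewrite (perm_size pe) size_map size_enum_ord.
rewrite (permP pe) count_map.
rewrite leqNgt; apply/negP.
have -> : count (preim d (fun x => 4 <= x)) (enum 'I_p.+3) = #|preim d (fun x => 4 <= x)|.
  rewrite -sum1_count big_enum_cond /= -sum1_card; by [].
move/card_gt1P => [i [j [hi hj ij]]].
exact: (atmost i j ij hi hj).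
Qed.
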